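(* (a) For every single-qubit density matrix $\sigma$ there exist non-negative functions $w^0_\sigma,w^1_\sigma:\mathbb{Z}_2^2\to[0,\infty)$ with $\sum_{\mathbf{u}}(w^0_\sigma(\mathbf{u})+w^1_\sigma(\mathbf{u}))=1$ and $\sigma=\sum_{\mathbf{u}\in\mathbb{Z}_2^2}\big(w^0_\sigma(\mathbf{u})A^{0}(\mathbf{u})+w^1_\sigma(\mathbf{u})A^{a_xa_z}(\mathbf{u})\big)$, where $A^{a_xa_z}$ uses the single-qubit frame function $F(a_x,a_z)=a_xa_z$. (b) Consequently, every $n$-qubit product state $\rho=\bigotimes_{i=1}^n\rho_i$ has the non-negative representation $\rho=\sum_{\mathbf{b}\in\mathbb{Z}_2^n}\sum_{\mathbf{u}\in\mathbb{Z}_2^{2n}}W^{F_{\mathbf{b}}}(\mathbf{u})A^{F_{\mathbf{b}}}(\mathbf{u})$ over the set of frame functions $\mathcal{F}=\{F_{\mathbf{b}}:\mathbf{b}\in\mathbb{Z}_2^n\}$, $F_{\mathbf{b}}(\mathbf{a})=\sum_{i=1}^nb_ia_{ix}a_{iz}$, with product weights $W^{F_{\mathbf{b}}}(\mathbf{u})=\prod_{i=1}^nw^{b_i}_{\rho_i}(u_{ix},u_{iz})$.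
   Context: Let $n\ge 1$. Phase-space points are $\mathbf{u}=(\mathbf{u}_x,\mathbf{u}_z)=(u_{1x},\dots,u_{nx},u_{1z},\dots,u_{nz})\in\mathbb{Z}_2^{2n}$. For $\mathbf{a}\in\mathbb{Z}_2^{2n}$ let $T_{\mathbf{a}}=\bigotimes_{j=1}^n i^{a_{jx}a_{jz}}X^{a_{jx}}Z^{a_{jz}}$, where $X,Z$ are the single-qubit Pauli matrices. The symplectic product is $[\mathbf{u},\mathbf{a}]=\mathbf{u}_x\cdot\mathbf{a}_z+\mathbf{u}_z\cdot\mathbf{a}_x\pmod 2$. A frame function is any $F:\mathbb{Z}_2^{2n}\to\mathbb{Z}_2$ with $F(\mathbf{0})=0$. The phase point operator is $A^F(\mathbf{u})=2^{-n}\sum_{\mathbf{a}\in\mathbb{Z}_2^{2n}}(-1)^{[\mathbf{u},\mathbf{a}]+F(\mathbf{a})}T_{\mathbf{a}}$ (for $n=1$ this gives the single-qubit operators $A^0(\mathbf{u})$, $A^{a_xa_z}(\mathbf{u})$). A non-negative representation of $\rho$ over a finite set $\mathcal{F}$ of frame functions is a function $W:\mathcal{F}\times\mathbb{Z}_2^{2n}\to[0,\infty)$, $(F,\mathbf{u})\mapsto W^F(\mathbf{u})$, with $\sum_{F,\mathbf{u}}W^F(\mathbf{u})=1$ and $\rho=\sum_{F,\mathbf{u}}W^F(\mathbf{u})A^F(\mathbf{u})$. *)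

(* Defs.v *)
From HB Require Import structures.
From mathcomp Require Import all_boot all_order all_algebra.
Set Implicit Arguments. Unset Strict Implicit. Unset Printing Implicit Defensive.
Import Order.TTheory GRing.Theory Num.Theory.
Local Open Scope ring_scope.

Definition adjmx (C : numClosedFieldType) m k (M : 'M[C]_(m, k)) : 'M[C]_(k, m) :=
  (map_mx Num.conj M)^T.

Definition density (C : numClosedFieldType) m (rho : 'M[C]_m) : Prop :=
  [/\ adjmx rho = rho,
      (forall v : 'rV[C]_m, 0 <= (v *m rho *m adjmx v) 0 0)
    & \tr rho = 1].

(* qubit j of the computational-basis index i (little endian) *)
Definition bitI (j i : nat) : 'I_2 := inord (odd (i %/ 2 ^ j)).

(* tensor product  M_0 (x) M_1 (x) ... (x) M_{n-1}  of single-qubit operators,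
   given entrywise in the computational basis *)
Definition tens (C : numClosedFieldType) n (M : 'I_n -> 'M[C]_2) : 'M[C]_(2 ^ n) :=
  \matrix_(i, k) \prod_(j < n) M j (bitI j i) (bitI j k).

Definition PX (C : numClosedFieldType) : 'M[C]_2 := \matrix_(i, j) (i != j)%:R.
Definition PZ (C : numClosedFieldType) : 'M[C]_2 :=
  \matrix_(i, j) ((i == j)%:R * (-1) ^+ i).

Definition T1 (C : numClosedFieldType) (ax az : bool) : 'M[C]_2 :=
  ('i ^+ (ax && az)) *: ((if ax then PX C else 1%:M) *m (if az then PZ C else 1%:M)).

(* phase-space points / displacement vectors in Z_2^{2n} = (u_x, u_z) *)
Definition pt (n : nat) := ({ffun 'I_n -> bool} * {ffun 'I_n -> bool})%type.
Definition pt0 n : pt n := ([ffun => false], [ffun => false]).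

Definition Tn (C : numClosedFieldType) n (a : pt n) : 'M[C]_(2 ^ n) :=
  tens (fun j => T1 C (a.1 j) (a.2 j)).

(* symplectic product [u, a] (as a natural number; only its parity matters,
   it is used as an exponent of -1) *)
Definition symp n (u a : pt n) : nat :=
  \sum_(j < n) ((u.1 j && a.2 j) + (u.2 j && a.1 j))%N.

Definition frame_fun n (F : pt n -> bool) : Prop := F (pt0 n) = false.

Definition Aop (C : numClosedFieldType) n (F : pt n -> bool) (u : pt n)
  : 'M[C]_(2 ^ n) :=
  ((2 ^ n)%:R)^-1 *: \sum_(a : pt n) ((-1) ^+ (symp u a + F a)%N) *: Tn C a.

Definition nonneg_rep (C : numClosedFieldType) n (I : finType)
  (F : I -> pt n -> bool) (rho : 'M[C]_(2 ^ n)) (W : I -> pt n -> C) : Prop :=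
  [/\ forall i, frame_fun (F i),
      forall i u, 0 <= W i u,
      \sum_(i : I) \sum_(u : pt n) W i u = 1
    & rho = \sum_(i : I) \sum_(u : pt n) W i u *: Aop C (F i) u].

Definition F0 (a : pt 1) : bool := false.
Definition Fxz (a : pt 1) : bool := a.1 ord0 && a.2 ord0.

Definition pt1 (u : bool * bool) : pt 1 := ([ffun => u.1], [ffun => u.2]).

Definition Fb n (b : {ffun 'I_n -> bool}) (a : pt n) : bool :=
  odd (\sum_(i < n) (b i && a.1 i && a.2 i)).

(* the single-qubit decomposition of part (a): w c u = w^c_sigma(u) *)
Definition single_rep (C : numClosedFieldType) (sigma : 'M[C]_2)
  (w : bool -> bool * bool -> C) : Prop :=
  [/\ forall c u, 0 <= w c u,
      \sum_(u : bool * bool) (w false u + w true u) = 1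
    & sigma = \sum_(u : bool * bool)
               (w false u *: Aop C F0 (pt1 u) + w true u *: Aop C Fxz (pt1 u))].

(* Main.v *)
Require Import Defs.
From HB Require Import structures.
From mathcomp Require Import all_boot all_order all_algebra.
From mathcomp Require Import ring lra.
Import Order.TTheory GRing.Theory Num.Theory.
Local Open Scope ring_scope.

Section S.
Variable C : numClosedFieldType.

Lemma expr_sum (x : C) (I : finType) (f : I -> nat) :
  x ^+ (\sum_i f i)%N = \prod_i x ^+ f i.
Proof. exact: (big_morph (fun n => x ^+ n) (exprD x) (expr0 x)). Qed.

Lemma D2 n (X Y : finType) (g : 'I_n -> X -> Y -> C) :
  \prod_i \sum_x \sum_y g i x y =
  \sum_(f1 : {ffun 'I_n -> X}) \sum_(f2 : {ffun 'I_n -> Y}) \prod_i g i (f1 i) (f2 i).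
Proof.
rewrite (bigA_distr_bigA (fun i x => \sum_y g i x y)).
by apply: eq_bigr => f1 _; rewrite bigA_distr_bigA.
Qed.

Lemma D3 n (B X Y : finType) (g : 'I_n -> B -> X -> Y -> C) :
  \prod_i \sum_c \sum_x \sum_y g i c x y =
  \sum_(b : {ffun 'I_n -> B}) \sum_(f1 : {ffun 'I_n -> X}) \sum_(f2 : {ffun 'I_n -> Y})
     \prod_i g i (b i) (f1 i) (f2 i).
Proof.
rewrite (bigA_distr_bigA (fun i c => \sum_x \sum_y g i c x y)).
by apply: eq_bigr => b _; rewrite D2.
Qed.

Definition Loc (c ux uz : bool) (p q : 'I_2) : C :=
  2%:R^-1 * \sum_(ax : bool) \sum_(az : bool)
     (-1) ^+ ((ux && az) + (uz && ax) + (c && ax && az))%N * T1 C ax az p q.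

Lemma AopE n (b : {ffun 'I_n -> bool}) (u : pt n) r k :
  Aop C (Fb b) u r k = \prod_(j < n) Loc (b j) (u.1 j) (u.2 j) (bitI j r) (bitI j k).
Proof.
rewrite /Aop /Loc mxE summxE big_split /= prodr_const card_ord natrX exprVn.
congr (_ * _).
rewrite D2 pair_bigA /=; apply: eq_bigr => -[a1 a2] _ /=. 
rewrite mxE /Tn /tens mxE big_split /=; congr (_ * _).
rewrite exprD /Fb signr_odd /symp !expr_sum -big_split /=.
apply: eq_bigr => j _ /=.
by rewrite !exprD.
Qed.

Lemma Aop_ext n (F G : pt n -> bool) u : F =1 G -> Aop C F u = Aop C G u.
Proof. by move=> H; rewrite /Aop; congr (_ *: _); apply: eq_bigr => a _; rewrite H. Qed.

Lemma bitI0 (p : 'I_2) : bitI 0 p = p.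
Proof.
rewrite /bitI /= expn0 divn1.
by case: p => [[|[|]]] // ?; apply/val_inj; rewrite /= inordK.
Qed.

Lemma Aop1E (c : bool) (u : bool * bool) (p q : 'I_2) :
  Aop C (if c then Fxz else F0) (pt1 u) p q = Loc c u.1 u.2 p q.
Proof.
rewrite (@Aop_ext 1 _ (Fb [ffun => c])); last first.
  by move=> a; rewrite /Fb big_ord1 ffunE; case: c => //=; rewrite oddb.
have := @AopE 1 [ffun => c] (pt1 u) p q; rewrite big_ord1 /= !ffunE.
by rewrite !bitI0.
Qed.

Lemma sum_cu (f : bool -> bool * bool -> C) :
  \sum_(u : bool * bool) (f false u + f true u) =
  \sum_(c : bool) \sum_(x : bool) \sum_(y : bool) f c (x, y).
Proof.
rewrite big_split /= big_bool /= addrC.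
by congr (_ + _); rewrite pair_bigA /=; apply: eq_bigr => -[].
Qed.

Lemma repE (w : bool -> bool * bool -> C) (p q : 'I_2) :
  (\sum_(u : bool * bool)
     (w false u *: Aop C F0 (pt1 u) + w true u *: Aop C Fxz (pt1 u))) p q =
  \sum_(c : bool) \sum_(x : bool) \sum_(y : bool) w c (x, y) * Loc c x y p q.
Proof.
rewrite summxE -(sum_cu (fun c u => w c u * Loc c u.1 u.2 p q)).
apply: eq_bigr => u _; rewrite [LHS]mxE.
by congr (_ + _); rewrite [LHS]mxE; congr (_ * _); [exact: (Aop1E false) | exact: (Aop1E true)].
Qed.

Lemma partB (n : nat) (rho : 'I_n -> 'M[C]_2) (w : 'I_n -> bool -> bool * bool -> C) :
     (forall i, single_rep (rho i) (w i)) ->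
     nonneg_rep (Fb (n:=n)) (tens rho)
       (fun b u => \prod_(i < n) w i (b i) (u.1 i, u.2 i)).
Proof.
move=> Hw; split.
- by move=> b; rewrite /frame_fun /Fb big1 // => i _; rewrite /pt0 /= ffunE andbF.
- move=> b u; apply: prodr_ge0 => i _; case: (Hw i) => H _ _; exact: H.
- transitivity (\prod_(i < n) \sum_(c : bool) \sum_(x : bool) \sum_(y : bool) w i c (x, y)).
    rewrite D3; apply: eq_bigr => b _; rewrite pair_bigA /=.
    by apply: eq_bigr => -[].
  by rewrite big1 // => i _; case: (Hw i) => _ H _; rewrite -H sum_cu.
- apply/matrixP => r k.
  transitivity (\prod_(j < n) \sum_(c : bool) \sum_(x : bool) \sum_(y : bool)
      w j c (x, y) * Loc c x y (bitI j r) (bitI j k)).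
    rewrite mxE; apply: eq_bigr => j _; case: (Hw j) => _ _ H.
    by rewrite {1}H repE.
  rewrite D3 summxE; apply: eq_bigr => b _.
  rewrite summxE pair_bigA /=; apply: eq_bigr => -[u1 u2] _ /=.
  by rewrite mxE AopE -big_split.
Qed.

Definition wgt (x y z : C) (c ux uz : bool) : C :=
  (1 + (-1) ^+ uz * x) * (1 + (-1) ^+ (ux + uz + c)%N * y) * (1 + (-1) ^+ ux * z) / 8%:R.

Lemma wgt_sum x y z : \sum_(c : bool) \sum_(ux : bool) \sum_(uz : bool) wgt x y z c ux uz = 1.
Proof. rewrite !big_bool /wgt /=. by field. Qed.

Lemma key x y z (T : bool -> bool -> C) :
  \sum_(c : bool) \sum_(ux : bool) \sum_(uz : bool) wgt x y z c ux uz *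
    (2%:R^-1 * \sum_(ax : bool) \sum_(az : bool)
      (-1) ^+ ((ux && az) + (uz && ax) + (c && ax && az))%N * T ax az)
  = 2%:R^-1 * (T false false + x * T true false + y * T true true + z * T false true).
Proof. rewrite !big_bool /wgt /=. by field. Qed.

Lemma sum2 (F : 'I_2 -> C) : \sum_(i < 2) F i = F 0 + F 1.
Proof. by rewrite big_ord_recl big_ord1; congr (_ + F _); apply/val_inj. Qed.

Definition rv (v0 v1 : C) : 'rV[C]_2 := \row_(j < 2) [:: v0; v1]`_j.

Lemma quad (M : 'M[C]_2) v0 v1 :
  (rv v0 v1 *m M *m adjmx (rv v0 v1)) 0 0 =
  v0 * M 0 0 * v0^* + v0 * M 0 1 * v1^* + v1 * M 1 0 * v0^* + v1 * M 1 1 * v1^*.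
Proof.
rewrite /adjmx /rv !mxE !sum2 !mxE !sum2 !mxE /=; ring.
Qed.

Lemma eq_mod_i (E1 E2 K : C) : E1 - E2 = ('i ^+ 2 + 1) * K -> E1 = E2.
Proof. by rewrite sqrCi addNr mul0r => /eqP; rewrite subr_eq0 => /eqP. Qed.

Lemma one2 : (1 : 'I_2) = ord_max. Proof. by apply/val_inj. Qed.
Lemma ord2P (p : 'I_2) : p = ord0 \/ p = ord_max.
Proof. by case: p => [[|[|]]] // H; [left|right]; apply/val_inj. Qed.

Lemma ord2P' (p : 'I_2) : p = 0 \/ p = 1.
Proof. by case: p => [[|[|]]] // H; [left|right]; apply/val_inj. Qed.

Lemma T1E ax az (p q : 'I_2) : T1 C ax az p q =
  'i ^+ (ax && az) * (if ax then (p != q)%:R else (p == q)%:R) *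
  (if az then (-1) ^+ q else 1).
Proof.
have m12 : (1 %% 2 = 1)%N by [].
rewrite /T1 mxE; case: ax; case: az => /=; rewrite !mxE ?sum2 ?mxE /= ?one2; case: (ord2P p) => ->; case: (ord2P q) => -> /=.
all: rewrite ?m12; ring.
Qed.

Lemma partA (sigma : 'M[C]_2) : density sigma ->
     exists w : bool -> bool * bool -> C, single_rep sigma w.
Proof.
case=> _ Hpsd Htr.
set a := sigma 0 0; set b := sigma 0 1; set b' := sigma 1 0; set d := sigma 1 1.
have Htr' : a + d = 1 by rewrite -Htr /mxtrace sum2.
set x := b + b'; set y := 'i * (b - b'); set z := a - d.
have Q v0 v1 : 0 <= v0 * a * v0^* + v0 * b * v1^* + v1 * b' * v0^* + v1 * d * v1^*.
  by have := Hpsd (rv v0 v1); rewrite quad.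
have ge (E T K1 K2 : C) : 0 <= E ->
    T - E = K1 * (a + d - 1) + ('i ^+ 2 + 1) * K2 -> 0 <= T.
  move=> hE; rewrite Htr' subrr sqrCi addNr mulr0 mul0r addr0 => /eqP.
  by rewrite subr_eq0 => /eqP ->.
have ci : 'i^* = -'i :> C by exact: conjCi.
have ci' : (-'i)^* = 'i :> C.
  by rewrite -ci conjCK.
have hx : forall s : nat, 0 <= 1 + (-1) ^+ s * x.
  move=> s; rewrite -signr_odd; case: (odd s) => /=.
    have := Q 1 (-1); rewrite !rmorphN !rmorph1 => /(ge _ _ (-1) 0); apply.
    rewrite /x; ring.
  have := Q 1 1; rewrite !rmorph1 => /(ge _ _ (-1) 0); apply.
  rewrite /x; ring.
have hy : forall s : nat, 0 <= 1 + (-1) ^+ s * y.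
  move=> s; rewrite -signr_odd; case: (odd s) => /=.
    have := Q 1 'i; rewrite !rmorph1 ci => /(ge _ _ (-1) d); apply.
    rewrite /y; ring.
  have := Q 1 (-'i); rewrite !rmorph1 ci' => /(ge _ _ (-1) d); apply.
  rewrite /y; ring.
have hz : forall s : nat, 0 <= 1 + (-1) ^+ s * z.
  move=> s; rewrite -signr_odd; case: (odd s) => /=.
    have := addr_ge0 (Q 0 1) (Q 0 1); rewrite !rmorph1 !rmorph0 => /(ge _ _ (-1) 0); apply.
    rewrite /z; ring.
  have := addr_ge0 (Q 1 0) (Q 1 0); rewrite !rmorph1 !rmorph0 => /(ge _ _ (-1) 0); apply.
  rewrite /z; ring.
exists (fun c u => wgt x y z c u.1 u.2); split.
- move=> c [ux uz]; rewrite /wgt /=.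
  by rewrite mulr_ge0 ?invr_ge0 ?ler0n // !mulr_ge0.
- by rewrite (sum_cu (fun c u => wgt x y z c u.1 u.2)) /= wgt_sum.
apply/matrixP => p q; rewrite (repE (fun c u => wgt x y z c u.1 u.2)) /=.
have := key x y z (fun ax az => T1 C ax az p q); rewrite /= => ->.
rewrite !T1E /=.
have eqh (E1 E2 K1 K2 : C) :
    E1 - E2 = K1 * (a + d - 1) + ('i ^+ 2 + 1) * K2 -> E1 = E2.
  rewrite Htr' subrr sqrCi addNr mulr0 mul0r addr0 => /eqP.
  by rewrite subr_eq0 => /eqP.
have m12 : (1 %% 2 = 1)%N by [].
case: (ord2P' p) => ->; case: (ord2P' q) => -> /=; rewrite ?m12.
- by apply: (eqh _ _ 2^-1 0); rewrite /x /y /z /a /b /b' /d; field.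
- by apply: (eqh _ _ 0 (2^-1 * (b - b'))); rewrite /x /y /z /a /b /b' /d; field.
- by apply: (eqh _ _ 0 (- (2^-1 * (b - b')))); rewrite /x /y /z /a /b /b' /d; field.
- by apply: (eqh _ _ 2^-1 0); rewrite /x /y /z /a /b /b' /d; field.
Qed.
End S.

Theorem mainTheorem8 (C : numClosedFieldType) :
  (forall sigma : 'M[C]_2, density sigma ->
     exists w : bool -> bool * bool -> C, single_rep sigma w)
  /\
  (forall (n : nat) (rho : 'I_n -> 'M[C]_2) (w : 'I_n -> bool -> bool * bool -> C),
     (forall i, density (rho i)) ->
     (forall i, single_rep (rho i) (w i)) ->
     nonneg_rep (Fb (n:=n)) (tens rho)
       (fun b u => \prod_(i < n) w i (b i) (u.1 i, u.2 i))).
Proof.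
split; first exact: partA.
by move=> n rho w _ Hw; apply: partB.
Qed.
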